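(* Let $|q|<1$ and $|qa|<|z|$, with parameters such that no denominator vanishes. Then $$f(a,k,z,q)+f(-a,-k,z,q)=2f(a^2,k^2,z^2,q^2).$$
   Context: Notation: $(x;q)_n=(1-x)(1-xq)\cdots(1-xq^{n-1})$, $(x_1,\dots,x_m;q)_n=(x_1;q)_n\cdots(x_m;q)_n$. Define $$f(a,k,z,q):=\sum_{n=1}^{\infty}\frac{(q\sqrt{k},-q\sqrt{k},k,z,k/a;q)_{n}}{(\sqrt{k},-\sqrt{k},qk,qk/z,qa;q)_{n}(1-q^n)}\left(\frac{qa}{z}\right)^{n}.$$ *)

(* Defs.v *)
From Stdlib Require Import Reals.
Open Scope R_scope.

Definition CC : Type := (R * R)%type.
Definition RtoC (x : R) : CC := (x, 0).
Definition C0 : CC := (0, 0).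
Definition C1 : CC := (1, 0).
Definition Cadd (u v : CC) : CC := (fst u + fst v, snd u + snd v).
Definition Copp (u : CC) : CC := (- fst u, - snd u).
Definition Csub (u v : CC) : CC := Cadd u (Copp v).
Definition Cmul (u v : CC) : CC :=
  (fst u * fst v - snd u * snd v, fst u * snd v + snd u * fst v).
Definition Cinv (u : CC) : CC :=
  (fst u / (fst u ^ 2 + snd u ^ 2), - snd u / (fst u ^ 2 + snd u ^ 2)).
Definition Cdiv (u v : CC) : CC := Cmul u (Cinv v).
Definition Cmod (u : CC) : R := sqrt (fst u ^ 2 + snd u ^ 2).
Fixpoint Cpow (u : CC) (n : nat) : CC :=
  match n with O => C1 | S m => Cmul (Cpow u m) u end.

Fixpoint qpoch (x q : CC) (n : nat) : CC :=
  match n with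
  | O => C1
  | S m => Cmul (qpoch x q m) (Csub C1 (Cmul x (Cpow q m)))
  end.

(* The n-th term of the series defining f(a,k,z,q), where r is a chosen
   square root of k (the term is invariant under r |-> -r). *)
Definition f_term (a k z q r : CC) (n : nat) : CC :=
  Cmul
    (Cdiv
      (Cmul (Cmul (Cmul (Cmul (qpoch (Cmul q r) q n) (qpoch (Copp (Cmul q r)) q n))
                        (qpoch k q n)) (qpoch z q n)) (qpoch (Cdiv k a) q n))
      (Cmul (Cmul (Cmul (Cmul (Cmul (qpoch r q n) (qpoch (Copp r) q n))
                        (qpoch (Cmul q k) q n)) (qpoch (Cdiv (Cmul q k) z) q n))
                        (qpoch (Cmul q a) q n))
            (Csub C1 (Cpow q n))))
    (Cpow (Cdiv (Cmul q a) z) n).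

(* partial sum  sum_{n=1}^{N} g n *)
Fixpoint psum (g : nat -> CC) (N : nat) : CC :=
  match N with O => C0 | S M => Cadd (psum g M) (g (S M)) end.

Definition series_sum_to (g : nat -> CC) (l : CC) : Prop :=
  forall eps : R, eps > 0 ->
    exists N : nat, forall M : nat, (M >= N)%nat -> Cmod (Csub (psum g M) l) < eps.

Definition f_is (a k z q r l : CC) : Prop := series_sum_to (f_term a k z q r) l.

Definition denoms_nonzero (a k z q r : CC) : Prop :=
  a <> C0 /\ z <> C0 /\
  forall n : nat, (n >= 1)%nat ->
    qpoch r q n <> C0 /\ qpoch (Copp r) q n <> C0 /\ qpoch (Cmul q k) q n <> C0 /\
    qpoch (Cdiv (Cmul q k) z) q n <> C0 /\ qpoch (Cmul q a) q n <> C0 /\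
    Csub C1 (Cpow q n) <> C0.

(* Main.v *)
From Stdlib Require Import Reals Lra Lia.
From Coquelicot Require Import Coquelicot.
Require Defs.
Open Scope C_scope.


Definition qp (x q : C) (n : nat) : C := Defs.qpoch x q n.
Definition pw (q : C) (n : nat) : C := Defs.Cpow q n.

Lemma qpS (x q : C) (n : nat) : qp x q (S n) = qp x q n * (1 - x * pw q n).
Proof. reflexivity. Qed.
Lemma qp0 (x q : C) : qp x q 0 = 1.
Proof. reflexivity. Qed.
Lemma pwS (q : C) (n : nat) : pw q (S n) = pw q n * q.
Proof. reflexivity. Qed.
Lemma pw0 (q : C) : pw q 0 = 1.
Proof. reflexivity. Qed.

Lemma pw_add (q : C) (i j : nat) : pw q (i + j) = pw q i * pw q j.
Proof. induction j as [|j IH]. rewrite Nat.add_0_r, pw0. ring.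
  rewrite Nat.add_succ_r, !pwS, IH. ring. Qed.
Lemma pw_mul (u v : C) (n : nat) : pw (u * v) n = pw u n * pw v n.
Proof. induction n as [|n IH]. rewrite !pw0. ring. rewrite !pwS, IH. ring. Qed.
Lemma Cmod_pw (q : C) (n : nat) : Cmod (pw q n) = (Cmod q ^ n)%R.
Proof. induction n as [|n IH]. rewrite pw0, Cmod_1. simpl. reflexivity.
  rewrite pwS, Cmod_mult, IH. simpl. ring. Qed.

Lemma qp_shift (x q : C) (n : nat) : qp x q (S n) = (1 - x) * qp (x * q) q n.
Proof. induction n as [|n IH]. rewrite qpS, !qp0, pw0. ring.
  rewrite qpS, IH, qpS, pwS. ring. Qed.

Lemma qp_split (x q : C) (j n : nat) : qp x q (j + n) = qp x q j * qp (x * pw q j) q n.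
Proof. induction n as [|n IH]. rewrite Nat.add_0_r, qp0. ring.
  rewrite Nat.add_succ_r, !qpS, IH, pw_add. ring. Qed.

Lemma Cmult_nz (u v : C) : u <> 0 -> v <> 0 -> u * v <> 0.
Proof. intros Hu Hv H. apply Cmod_gt_0 in Hu. apply Cmod_gt_0 in Hv.
  assert (Cmod (u*v) = 0%R) by (rewrite H; apply Cmod_0).
  rewrite Cmod_mult in H0. nra. Qed.

Lemma qp_nz (x q : C) (n : nat) : (forall i, 1 - x * pw q i <> 0) -> qp x q n <> 0.
Proof. intros H. induction n as [|n IH]. rewrite qp0. intro E. injection E. lra.
  rewrite qpS. apply Cmult_nz; auto. Qed.

Lemma Cmod_1m_ge (u : C) : (1 - Cmod u <= Cmod (1 - u))%R.
Proof. pose proof (Cmod_triangle (1 - u) u). replace (1 - u + u) with (RtoC 1) in H by ring.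
  rewrite Cmod_1 in H. lra. Qed.
Lemma Cmod_1m_le (u : C) : (Cmod (1 - u) <= 1 + Cmod u)%R.
Proof. pose proof (Cmod_triangle 1 (- u)). rewrite Cmod_opp, Cmod_1 in H. exact H. Qed.
Lemma Cmod_1p_le (u v : C) : (Cmod (u - v) <= Cmod u + Cmod v)%R.
Proof. pose proof (Cmod_triangle u (- v)). rewrite Cmod_opp in H. exact H. Qed.


Lemma pow_le1 (s : R) d : (0 <= s <= 1)%R -> (0 <= s ^ d <= 1)%R.
Proof. intros H. induction d as [|d IH]; simpl. lra. nra. Qed.
Lemma pow_anti (s : R) n m : (0 <= s <= 1)%R -> (n <= m)%nat -> (s ^ m <= s ^ n)%R.
Proof. intros H Hnm. replace m with (n + (m - n))%nat by lia. rewrite pow_add.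
  pose proof (pow_le1 s (m - n) H). pose proof (pow_le1 s n H). nra. Qed.

Lemma qp_upper_aux (x q : C) n : (Cmod q < 1)%R ->
  (Cmod (qp x q n) <= exp (Cmod x * (1 - Cmod q ^ n) / (1 - Cmod q)))%R.
Proof. intros Hq. pose proof (Cmod_ge_0 q). induction n as [|n IH].
  - rewrite qp0, Cmod_1. simpl. replace (Cmod x * (1 - 1) / (1 - Cmod q))%R with 0%R by (field; lra).
    rewrite exp_0. lra.
  - rewrite qpS, Cmod_mult.
    assert (H1 : (Cmod (1 - x * pw q n) <= exp (Cmod x * Cmod q ^ n))%R).
    { eapply Rle_trans. apply Cmod_1m_le. rewrite Cmod_mult, Cmod_pw. apply exp_ineq1_le. }
    replace (Cmod x * (1 - Cmod q ^ S n) / (1 - Cmod q))%R with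
      (Cmod x * (1 - Cmod q ^ n) / (1 - Cmod q) + Cmod x * Cmod q ^ n)%R by (simpl; field; lra).
    rewrite exp_plus. apply Rmult_le_compat; auto using Cmod_ge_0. Qed.

Lemma exp_mono (u v : R) : (u <= v)%R -> (exp u <= exp v)%R.
Proof. intros H. destruct (Rle_lt_or_eq_dec _ _ H) as [h|h]. left; apply exp_increasing; auto.
  rewrite h; lra. Qed.

Lemma qp_upper (x q : C) n : (Cmod q < 1)%R ->
  (Cmod (qp x q n) <= exp (Cmod x / (1 - Cmod q)))%R.
Proof. intros Hq. pose proof (Cmod_ge_0 q). pose proof (Cmod_ge_0 x).
  eapply Rle_trans. apply qp_upper_aux; auto. apply exp_mono.
  pose proof (pow_le1 (Cmod q) n ltac:(lra)).
  unfold Rdiv. apply Rmult_le_compat_r. apply Rlt_le, Rinv_0_lt_compat; lra. nra. Qed.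

Lemma div_le_aux (a b c : R) : (0 < b)%R -> (a <= c * b)%R -> (a / b <= c)%R.
Proof. intros Hb H. apply (Rmult_le_reg_r b). auto. unfold Rdiv. rewrite Rmult_assoc, Rinv_l by lra. lra. Qed.

Lemma qp_lower_fin (x q : C) N : (forall i, 1 - x * pw q i <> 0) ->
  exists L, (0 < L)%R /\ forall m, (m <= N)%nat -> (L <= Cmod (qp x q m))%R.
Proof. intros Hnz. induction N as [|N IH].
  - exists 1%R. split. lra. intros m Hm. replace m with 0%nat by lia. rewrite qp0, Cmod_1. lra.
  - destruct IH as [L [HL H]]. exists (Rmin L (Cmod (qp x q (S N)))). split.
    + apply Rmin_glb_lt; auto. apply Cmod_gt_0, qp_nz; auto.
    + intros m Hm. destruct (Nat.eq_dec m (S N)) as [->|h]. apply Rmin_r.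
      eapply Rle_trans. apply Rmin_l. apply H. lia. Qed.

Lemma qp_tail (x q : C) i0 d : (Cmod q < 1)%R -> (Cmod x * Cmod q ^ i0 <= (1 - Cmod q) / 2)%R ->
  (Cmod (qp x q i0) * (1 - Cmod x * (Cmod q ^ i0 - Cmod q ^ (i0 + d)) / (1 - Cmod q))
     <= Cmod (qp x q (i0 + d)))%R.
Proof. intros Hq Hi. pose proof (Cmod_ge_0 q). pose proof (Cmod_ge_0 x).
  induction d as [|d IH].
  - rewrite Nat.add_0_r. replace (Cmod x * (Cmod q ^ i0 - Cmod q ^ i0) / (1 - Cmod q))%R with 0%R
      by (field; lra). lra.
  - rewrite Nat.add_succ_r, qpS, Cmod_mult.
    set (s := Cmod q) in *. set (P := Cmod (qp x q i0)) in *.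
    pose proof (Cmod_ge_0 (qp x q i0)).
    assert (Hs1 : (s ^ (i0 + d) <= s ^ i0)%R) by (apply pow_anti; lra || lia).
    assert (Hs2 : (0 <= s ^ (i0 + d))%R) by (apply pow_le1; lra).
    assert (He : (1 - Cmod x * s ^ (i0 + d) <= Cmod (1 - x * pw q (i0 + d)))%R).
    { eapply Rle_trans. 2: apply Cmod_1m_ge. rewrite Cmod_mult, Cmod_pw. fold s. lra. }
    assert (HT0 : (0 <= Cmod x * (s ^ i0 - s ^ (i0 + d)) / (1 - s))%R).
    { apply Rmult_le_pos. nra. apply Rlt_le, Rinv_0_lt_compat; lra. }
    assert (HT1 : (Cmod x * (s ^ i0 - s ^ (i0 + d)) / (1 - s) <= 1/2)%R).
    { apply div_le_aux. lra. nra. }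
    assert (Hes : (Cmod x * s ^ (i0 + d) <= 1/2)%R) by nra.
    replace (s ^ S (i0 + d))%R with (s ^ (i0 + d) * s)%R by (simpl; ring).
    set (T := (Cmod x * (s ^ i0 - s ^ (i0 + d)) / (1 - s))%R) in *.
    set (e := (Cmod x * s ^ (i0 + d))%R) in *.
    replace (Cmod x * (s ^ i0 - s ^ (i0 + d) * s) / (1 - s))%R with (T + e)%R
      by (unfold T, e; field; lra).
    assert (He0 : (0 <= e)%R) by (unfold e; nra).
    apply Rle_trans with (P * (1 - T) * (1 - e))%R.
    { assert (0 <= P)%R by apply Cmod_ge_0. assert (0 <= P * T * e)%R by (apply Rmult_le_pos; [apply Rmult_le_pos|]; lra). nra. }
    assert (0 <= P)%R by apply Cmod_ge_0. apply Rmult_le_compat; try lra. nra. Qed.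

Lemma qp_lower (x q : C) : (Cmod q < 1)%R -> (forall i, 1 - x * pw q i <> 0) ->
  exists L, (0 < L)%R /\ forall m, (L <= Cmod (qp x q m))%R.
Proof. intros Hq Hnz. pose proof (Cmod_ge_0 q). pose proof (Cmod_ge_0 x).
  destruct (pow_lt_1_zero (Cmod q) ltac:(rewrite Rabs_pos_eq; lra) ((1 - Cmod q) / 2 / (Cmod x + 1)))
    as [i0 Hi0].
  { apply Rdiv_lt_0_compat; lra. }
  assert (Hi : (Cmod x * Cmod q ^ i0 <= (1 - Cmod q) / 2)%R).
  { specialize (Hi0 i0 (le_n _)). rewrite Rabs_pos_eq in Hi0 by (apply pow_le1; lra).
    pose proof (pow_le1 (Cmod q) i0 ltac:(lra)).
    apply Rle_trans with ((Cmod x + 1) * Cmod q ^ i0)%R. nra.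
    apply Rlt_le. apply (Rmult_lt_compat_l (Cmod x + 1)) in Hi0; [|lra].
    replace ((Cmod x + 1) * ((1 - Cmod q) / 2 / (Cmod x + 1)))%R with ((1 - Cmod q) / 2)%R in Hi0
      by (field; lra). exact Hi0. }
  destruct (qp_lower_fin x q i0 Hnz) as [L [HL HLm]].
  exists (L / 2)%R. split. lra. intros m. destruct (Compare_dec.le_lt_dec m i0) as [h|h].
  - specialize (HLm m h). lra.
  - replace m with (i0 + (m - i0))%nat by lia.
    eapply Rle_trans. 2: apply qp_tail; auto.
    set (d := (m - i0)%nat). specialize (HLm i0 (le_n _)).
    assert (Hs1 : (Cmod q ^ (i0 + d) <= Cmod q ^ i0)%R) by (apply pow_anti; lra || lia).
    assert (Hs2 : (0 <= Cmod q ^ (i0 + d))%R) by (apply pow_le1; lra).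
    assert (HT1 : (Cmod x * (Cmod q ^ i0 - Cmod q ^ (i0 + d)) / (1 - Cmod q) <= 1/2)%R).
    { apply div_le_aux. lra. nra. }
    nra. Qed.

Lemma qp_shift_lower (x q : C) : (Cmod q < 1)%R -> (forall i, 1 - x * pw q i <> 0) ->
  exists d, (0 < d)%R /\ forall j n, (d <= Cmod (qp (x * pw q j) q n))%R.
Proof. intros Hq Hnz. destruct (qp_lower x q Hq Hnz) as [L [HL H]].
  set (B := exp (Cmod x / (1 - Cmod q))).
  assert (HB : (0 < B)%R) by apply exp_pos.
  exists (L / B)%R. split. apply Rdiv_lt_0_compat; auto. intros j n.
  pose proof (qp_split x q j n) as E. apply (f_equal Cmod) in E. rewrite Cmod_mult in E.
  pose proof (qp_upper x q j Hq). fold B in H0. specialize (H (j + n)%nat).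
  pose proof (Cmod_ge_0 (qp (x * pw q j) q n)).
  apply (Rmult_le_reg_r B). auto. unfold Rdiv. rewrite Rmult_assoc, Rinv_l by lra.
  rewrite E in H. nra. Qed.

Lemma fac_lower (x q : C) : (Cmod q < 1)%R -> (forall i, 1 - x * pw q i <> 0) ->
  exists d, (0 < d)%R /\ forall j, (d <= Cmod (1 - x * pw q j))%R.
Proof. intros Hq Hnz. destruct (qp_shift_lower x q Hq Hnz) as [d [Hd H]].
  exists d. split; auto. intros j. specialize (H j 1%nat).
  replace (1 - x * pw q j) with (qp (x * pw q j) q 1); auto.
  rewrite qpS, qp0, pw0. ring. Qed.


Definition taug (a k c z q : C) (n : nat) : C :=
  (1 - k * (pw q n * pw q n)) / (1 - k * pw q n) * (qp z q n * qp c q n)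
   / (qp (q*k/z) q n * qp (q*a) q n * (1 - pw q n)) * pw (q*a/z) n.

Definition Ug (a k c z q : C) (m : nat) : C :=
  - pw (q*a/z) (S m) / (1 - q*a/z) * (1 - k*a*pw q (S (S m))/z) / (1 - k * pw q (S m))
   * (qp z q (S m) * qp c q (S m)) / (qp (q*k/z) q (S m) * qp (q*a) q (S m)).

Definition g (x : C) : C := x / (1 - x).
Definition Cc (a k z q : C) : C := g (q*k) + g (q*a/z) - g (q*k/z) - g (q*a).

Lemma qp_shift_inv (x q : C) n : 1 - x <> 0 -> qp (x * q) q n = qp x q (S n) / (1 - x).
Proof. intros H. rewrite qp_shift. field. auto. Qed.

Lemma nz_eq (u v w : C) : v <> 0 -> v = u * w -> u <> 0.
Proof. intros H E Hu. apply H. rewrite E, Hu. ring. Qed.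

Ltac nzt z := match goal with |- ?u <> _ => first [ assumption |
   match goal with H : ?v <> _ |- _ => first [ solve [apply (nz_eq u v 1 H); ring]
      | solve [apply (nz_eq u v (/ z) H); field; auto] ] end ] end.

Lemma tele_step (a k c z q : C) m :
  c * a = k -> z <> 0 -> 1 - q*a/z <> 0 ->
  (forall i, 1 - (q*k) * pw q i <> 0) -> (forall i, 1 - (q*k/z) * pw q i <> 0) ->
  (forall i, 1 - (q*a) * pw q i <> 0) -> (forall i, 1 - pw q (S i) <> 0) ->
  taug a k c z q (S m) - taug (q*a) (q*k) c z q (S m) = Ug a k c z q (S m) - Ug a k c z q m.
Proof. intros Hc Hz Haz Hk Hkz Ha Hq1.
  pose proof (qp_nz _ _ m Hkz) as N1. pose proof (qp_nz _ _ m Ha) as N2.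
  pose proof (Hk 0%nat) as K0. pose proof (Hk m) as K1. pose proof (Hk (S m)) as K2.
  pose proof (Hkz 0%nat) as Z0. pose proof (Hkz m) as Z1. pose proof (Hkz (S m)) as Z2.
  pose proof (Ha 0%nat) as A0. pose proof (Ha m) as A1. pose proof (Ha (S m)) as A2.
  pose proof (Hq1 m) as Q1.
  rewrite pw0 in K0, Z0, A0. rewrite Cmult_1_r in K0, Z0, A0. rewrite pwS in K2, Z2, A2, Q1.
  unfold taug, Ug.
  replace (q * (q * k) / z) with ((q * k / z) * q) by (field; auto).
  replace (q * (q * a) / z) with (q * (q * a / z)) by (field; auto).
  replace (q * (q * a)) with ((q * a) * q) by ring.
  rewrite (qp_shift_inv (q * k / z)) by auto. rewrite (qp_shift_inv (q * a)) by auto.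
  rewrite pw_mul. rewrite !qpS, !pwS.
  set (y := pw q m) in *. set (W := pw (q * a / z) m).
  set (P1 := qp z q m) in *. set (P2 := qp c q m). set (D1 := qp (q * k / z) q m) in *.
  set (D2 := qp (q * a) q m) in *. subst k.
  field. repeat split; cbv beta; nzt z.
Qed.

Definition ps (f : nat -> C) (N : nat) : C := Defs.psum f N.
Lemma psS f N : ps f (S N) = ps f N + f (S N).
Proof. reflexivity. Qed.
Lemma ps0 f : ps f 0 = 0.
Proof. reflexivity. Qed.

Lemma U0 (a k c z q : C) :
  c * a = k -> z <> 0 -> 1 - q*a/z <> 0 -> 1 - q*k <> 0 -> 1 - q*k/z <> 0 -> 1 - q*a <> 0 ->
  Ug a k c z q 0 = - Cc a k z q.
Proof. intros Hc Hz Haz K0 Z0 A0. unfold Ug, Cc, g. rewrite !qpS, !qp0, !pwS, !pw0.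
  subst k. field. repeat split; cbv beta; nzt z. Qed.

Lemma tele_sum (a k c z q : C) N :
  c * a = k -> z <> 0 -> 1 - q*a/z <> 0 ->
  (forall i, 1 - (q*k) * pw q i <> 0) -> (forall i, 1 - (q*k/z) * pw q i <> 0) ->
  (forall i, 1 - (q*a) * pw q i <> 0) -> (forall i, 1 - pw q (S i) <> 0) ->
  ps (taug a k c z q) N - ps (taug (q*a) (q*k) c z q) N = Ug a k c z q N + Cc a k z q.
Proof. intros Hc Hz Haz Hk Hkz Ha Hq1. induction N as [|N IH].
  - rewrite !ps0. rewrite U0; auto.
    + ring.
    + specialize (Hk 0%nat). rewrite pw0, Cmult_1_r in Hk. auto.
    + specialize (Hkz 0%nat). rewrite pw0, Cmult_1_r in Hkz. auto.
    + specialize (Ha 0%nat). rewrite pw0, Cmult_1_r in Ha. auto.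
  - rewrite !psS.
    replace (ps (taug a k c z q) N + taug a k c z q (S N) -
      (ps (taug (q * a) (q * k) c z q) N + taug (q * a) (q * k) c z q (S N)))
    with ((ps (taug a k c z q) N - ps (taug (q * a) (q * k) c z q) N) +
      (taug a k c z q (S N) - taug (q * a) (q * k) c z q (S N))) by ring.
    rewrite IH, tele_step; auto. ring. Qed.


Fixpoint sm (F : nat -> C) (M : nat) : C :=
  match M with O => 0 | S M' => sm F M' + F M' end.

Lemma nz_of_lt1 (u : C) : (Cmod u < 1)%R -> 1 - u <> 0.
Proof. intros H E. pose proof (Cmod_1m_ge u). rewrite E, Cmod_0 in H0. lra. Qed.

Lemma fac_shift (X q : C) j : (forall i, 1 - X * pw q i <> 0) -> forall i, 1 - (X * pw q j) * pw q i <> 0.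
Proof. intros H i. replace (X * pw q j * pw q i) with (X * pw q (j + i)). apply H.
  rewrite pw_add. ring. Qed.

Lemma pow1_nz (q : C) : (Cmod q < 1)%R -> forall i, 1 - pw q (S i) <> 0.
Proof. intros Hq i. apply nz_of_lt1. rewrite Cmod_pw. pose proof (Cmod_ge_0 q).
  simpl. pose proof (pow_le1 (Cmod q) i ltac:(lra)). nra. Qed.

Lemma cm_mul_le (x y : C) (X Y : R) : (Cmod x <= X)%R -> (Cmod y <= Y)%R -> (Cmod (x * y) <= X * Y)%R.
Proof. intros H1 H2. rewrite Cmod_mult. apply Rmult_le_compat; auto using Cmod_ge_0. Qed.
Lemma cm_div_le (x y : C) (X Y : R) : (Cmod x <= X)%R -> (0 < Y)%R -> (Y <= Cmod y)%R ->
  (Cmod (x / y) <= X / Y)%R.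
Proof. intros H1 H2 H3. assert (y <> 0). { apply Cmod_gt_0. lra. }
  rewrite Cmod_div by auto. pose proof (Cmod_ge_0 x).
  unfold Rdiv. apply Rmult_le_compat; auto. apply Rlt_le, Rinv_0_lt_compat; lra.
  apply Rinv_le_contravar; auto. Qed.

Lemma ps_bound (f : nat -> C) (A r : R) N : (0 <= A)%R -> (0 <= r < 1)%R ->
  (forall m, (Cmod (f (S m)) <= A * r ^ (S m))%R) -> (Cmod (ps f N) <= A / (1 - r))%R.
Proof. intros HA Hr H.
  assert (G : forall N, (Cmod (ps f N) <= A * r * (1 - r ^ N) / (1 - r))%R).
  { induction N0 as [|N0 IH]. rewrite ps0, Cmod_0. simpl. replace (A * r * (1 - 1) / (1 - r))%R with 0%R by (field; lra). lra.
    rewrite psS. eapply Rle_trans. apply Cmod_triangle. specialize (H N0).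
    replace (A * r * (1 - r ^ S N0) / (1 - r))%R with (A * r * (1 - r ^ N0) / (1 - r) + A * r ^ S N0)%R
      by (simpl; field; lra). lra. }
  eapply Rle_trans. apply G. unfold Rdiv. apply Rmult_le_compat_r. apply Rlt_le, Rinv_0_lt_compat; lra.
  pose proof (pow_le1 r N ltac:(lra)). assert (r * (1 - r ^ N) <= 1)%R by nra.
  assert (0 <= r * (1 - r ^ N))%R by nra. nra. Qed.

Lemma sm_bound (F : nat -> C) (A r : R) M : (0 <= A)%R -> (0 <= r < 1)%R ->
  (forall j, (Cmod (F j) <= A * r ^ j)%R) -> (Cmod (sm F M) <= A / (1 - r))%R.
Proof. intros HA Hr H.
  assert (G : forall M, (Cmod (sm F M) <= A * (1 - r ^ M) / (1 - r))%R).
  { induction M0 as [|M0 IH]. simpl. rewrite Cmod_0. replace (A * (1 - 1) / (1 - r))%R with 0%R by (field; lra). lra.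
    simpl sm. eapply Rle_trans. apply Cmod_triangle. specialize (H M0).
    replace (A * (1 - r ^ S M0) / (1 - r))%R with (A * (1 - r ^ M0) / (1 - r) + A * r ^ M0)%R
      by (simpl; field; lra). lra. }
  eapply Rle_trans. apply G. unfold Rdiv. apply Rmult_le_compat_r. apply Rlt_le, Rinv_0_lt_compat; lra.
  pose proof (pow_le1 r M ltac:(lra)). nra. Qed.

Lemma sm_tail (F : nat -> C) (A r : R) N d : (0 <= A)%R -> (0 <= r < 1)%R ->
  (forall j, (Cmod (F j) <= A * r ^ j)%R) -> (Cmod (sm F (N + d) - sm F N) <= A * r ^ N / (1 - r))%R.
Proof. intros HA Hr H. induction d as [|d IH].
  - rewrite Nat.add_0_r. replace (sm F N - sm F N) with (RtoC 0) by ring. rewrite Cmod_0.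
    apply Rmult_le_pos. pose proof (pow_le1 r N ltac:(lra)). nra. apply Rlt_le, Rinv_0_lt_compat; lra.
  - assert (G : forall d, (Cmod (sm F (N + d) - sm F N) <= A * r ^ N * (1 - r ^ d) / (1 - r))%R).
    { induction d0 as [|d0 IH0]. rewrite Nat.add_0_r. replace (sm F N - sm F N) with (RtoC 0) by ring.
      rewrite Cmod_0. simpl. replace (A * r ^ N * (1 - 1) / (1 - r))%R with 0%R by (field; lra). lra.
      rewrite Nat.add_succ_r. simpl sm.
      replace (sm F (N + d0)%nat + F (N + d0)%nat - sm F N) with ((sm F (N + d0)%nat - sm F N) + F (N + d0)%nat) by ring.
      eapply Rle_trans. apply Cmod_triangle. specialize (H (N + d0)%nat). rewrite pow_add in H.
      replace (A * r ^ N * (1 - r ^ S d0) / (1 - r))%R with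
        (A * r ^ N * (1 - r ^ d0) / (1 - r) + A * (r ^ N * r ^ d0))%R by (simpl; field; lra). lra. }
    eapply Rle_trans. apply G. unfold Rdiv. apply Rmult_le_compat_r. apply Rlt_le, Rinv_0_lt_compat; lra.
    pose proof (pow_le1 r (S d) ltac:(lra)). pose proof (pow_le1 r N ltac:(lra)). assert (0 <= A * r ^ N)%R by nra. nra. Qed.

Lemma Cmod_comp_bound (x : C) (e : R) : (Rabs (fst x) < e / 2)%R -> (Rabs (snd x) < e / 2)%R ->
  (Cmod x < e)%R.
Proof. intros H1 H2. eapply Rle_lt_trans. apply Cmod_2Rmax.
  pose proof (sqrt_pos 2). pose proof (sqrt_sqrt 2 ltac:(lra)).
  assert (sqrt 2 < 2)%R by nra. pose proof (Rabs_pos (fst x)).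
  assert (Rmax (Rabs (fst x)) (Rabs (snd x)) < e / 2)%R by (apply Rmax_lub_lt; auto).
  assert (0 <= Rmax (Rabs (fst x)) (Rabs (snd x)))%R.
  { eapply Rle_trans. apply Rabs_pos. apply Rmax_l. }
  nra. Qed.

Lemma C_cauchy_lim (u : nat -> C) :
  (forall eps, (eps > 0)%R -> exists N, forall n m, (n >= N)%nat -> (m >= N)%nat -> (Cmod (u n - u m) < eps)%R) ->
  exists l, forall eps, (eps > 0)%R -> exists N, forall n, (n >= N)%nat -> (Cmod (u n - l) < eps)%R.
Proof. intros H.
  assert (H1 : Cauchy_crit (fun n => fst (u n))).
  { intros eps Heps. destruct (H eps Heps) as [N HN]. exists N. intros n m Hn Hm.
    unfold Rdist. eapply Rle_lt_trans. 2: apply (HN n m Hn Hm).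
    eapply Rle_trans. 2: apply Rmax_Cmod. eapply Rle_trans. 2: apply Rmax_l. right. reflexivity. }
  assert (H2 : Cauchy_crit (fun n => snd (u n))).
  { intros eps Heps. destruct (H eps Heps) as [N HN]. exists N. intros n m Hn Hm.
    unfold Rdist. eapply Rle_lt_trans. 2: apply (HN n m Hn Hm).
    eapply Rle_trans. 2: apply Rmax_Cmod. eapply Rle_trans. 2: apply Rmax_r. right. reflexivity. }
  destruct (Stdlib.Reals.Rcomplete.R_complete _ H1) as [l1 Hl1]. destruct (Stdlib.Reals.Rcomplete.R_complete _ H2) as [l2 Hl2].
  exists (l1, l2). intros eps Heps.
  destruct (Hl1 (eps / 2)%R ltac:(lra)) as [N1 HN1]. destruct (Hl2 (eps / 2)%R ltac:(lra)) as [N2 HN2].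
  exists (max N1 N2). intros n Hn. apply Cmod_comp_bound.
  - simpl. apply HN1. lia.
  - simpl. apply HN2. lia. Qed.

Section Iter.
Variables a k c z q : C.
Hypothesis Hs : (Cmod q < 1)%R.
Hypothesis Hqa : (Cmod (q * a) < Cmod z)%R.
Hypothesis Hc : c * a = k.
Hypothesis Hk : forall i, 1 - (q*k) * pw q i <> 0.
Hypothesis Hkz : forall i, 1 - (q*k/z) * pw q i <> 0.
Hypothesis Ha : forall i, 1 - (q*a) * pw q i <> 0.

Definition aj j := pw q j * a.
Definition kj j := pw q j * k.

Lemma z_nz : z <> 0.
Proof. intro E. rewrite E, Cmod_0 in Hqa. pose proof (Cmod_ge_0 (q * a)). lra. Qed.

Lemma Cmod_qaj j : (Cmod (q * aj j / z) <= Cmod (q * a / z))%R.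
Proof. unfold aj. replace (q * (pw q j * a) / z) with (pw q j * (q * a / z)) by (field; apply z_nz).
  rewrite Cmod_mult, Cmod_pw. pose proof (Cmod_ge_0 q). pose proof (pow_le1 (Cmod q) j ltac:(lra)).
  pose proof (Cmod_ge_0 (q * a / z)). nra. Qed.

Lemma rho_lt1 : (Cmod (q * a / z) < 1)%R.
Proof. pose proof z_nz. rewrite Cmod_div by auto. apply Rcomplements.Rlt_div_l.
  apply Cmod_gt_0; auto. lra. Qed.

Lemma tele_j j N :
  ps (taug (aj j) (kj j) c z q) N - ps (taug (aj (S j)) (kj (S j)) c z q) N
  = Ug (aj j) (kj j) c z q N + Cc (aj j) (kj j) z q.
Proof. pose proof z_nz as Hz.
  replace (aj (S j)) with (q * aj j) by (unfold aj; rewrite pwS; ring).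
  replace (kj (S j)) with (q * kj j) by (unfold kj; rewrite pwS; ring).
  apply tele_sum; auto.
  - unfold aj, kj. rewrite <- Hc. ring.
  - apply nz_of_lt1. eapply Rle_lt_trans. apply Cmod_qaj. apply rho_lt1.
  - intros i. replace (q * kj j) with ((q * k) * pw q j) by (unfold kj; ring). apply fac_shift; auto.
  - intros i. replace (q * kj j / z) with ((q * k / z) * pw q j) by (unfold kj; field; auto).
    apply fac_shift; auto.
  - intros i. replace (q * aj j) with ((q * a) * pw q j) by (unfold aj; ring). apply fac_shift; auto.
  - apply pow1_nz; auto. Qed.

Lemma iter N M : ps (taug a k c z q) N =
  sm (fun j => Ug (aj j) (kj j) c z q N + Cc (aj j) (kj j) z q) M + ps (taug (aj M) (kj M) c z q) N.
Proof. induction M as [|M IH].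
  - simpl. replace (aj 0) with a by (unfold aj; rewrite pw0; ring).
    replace (kj 0) with k by (unfold kj; rewrite pw0; ring). ring.
  - rewrite IH. simpl. rewrite <- (tele_j M N). ring. Qed.


Lemma Cmod_qaj_eq j : Cmod (q * aj j / z) = (Cmod q ^ j * Cmod (q * a / z))%R.
Proof. unfold aj. replace (q * (pw q j * a) / z) with (pw q j * (q * a / z)) by (field; apply z_nz).
  rewrite Cmod_mult, Cmod_pw. reflexivity. Qed.

Lemma s_bounds : (0 <= Cmod q < 1)%R.
Proof. split. apply Cmod_ge_0. auto. Qed.
Lemma rho_bounds : (0 <= Cmod (q * a / z) < 1)%R.
Proof. split. apply Cmod_ge_0. apply rho_lt1. Qed.

Lemma pow_sj_le (s r : R) j n : (0 <= s <= 1)%R -> (0 <= r)%R ->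
  ((s ^ j * r) ^ S n <= s ^ j * r ^ S n)%R.
Proof. intros Hs0 Hr. rewrite Rpow_mult_distr. simpl.
  pose proof (pow_le1 s j Hs0). pose proof (pow_le1 (s ^ j) n ltac:(lra)).
  pose proof (pow_le r n Hr) as Hp. 
  assert (0 <= r * r ^ n)%R by nra. assert (0 <= s ^ j * (r * r ^ n))%R by nra. nra. Qed.

Lemma Ug_bound : exists KU, (0 <= KU)%R /\ forall j N,
  (Cmod (Ug (aj j) (kj j) c z q N) <= KU * Cmod (q * a / z) ^ S N * Cmod q ^ j)%R.
Proof.
  destruct (fac_lower (q*k) q Hs Hk) as [dk [Hdk Hdk']].
  destruct (qp_shift_lower (q*k/z) q Hs Hkz) as [d1 [Hd1 Hd1']].
  destruct (qp_shift_lower (q*a) q Hs Ha) as [d2 [Hd2 Hd2']].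
  pose proof s_bounds as Hsb. pose proof rho_bounds as Hrb. pose proof z_nz as Hz.
  set (s := Cmod q) in *. set (rho := Cmod (q * a / z)) in *.
  set (Bz := exp (Cmod z / (1 - s))). set (Bc := exp (Cmod c / (1 - s))).
  assert (HBz : (0 < Bz)%R) by apply exp_pos. assert (HBc : (0 < Bc)%R) by apply exp_pos.
  pose proof (Cmod_ge_0 (k * a / z)).
  exists (/ (1 - rho) * (1 + Cmod (k * a / z)) / dk * (Bz * Bc) / (d1 * d2))%R. split.
  { apply Rmult_le_pos. apply Rmult_le_pos. apply Rmult_le_pos. apply Rmult_le_pos.
    apply Rlt_le, Rinv_0_lt_compat; lra. lra. apply Rlt_le, Rinv_0_lt_compat; lra. nra.
    apply Rlt_le, Rinv_0_lt_compat; nra. }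
  intros j N. unfold Ug.
  apply Rle_trans with ((((s ^ j * rho ^ S N) / (1 - rho) * (1 + Cmod (k * a / z))) / dk * (Bz * Bc)) / (d1 * d2))%R.
  2: { right. field. repeat split; lra. }
  apply cm_div_le. apply cm_mul_le. apply cm_div_le. apply cm_mul_le. apply cm_div_le.
  - rewrite Cmod_opp, Cmod_pw, Cmod_qaj_eq. fold s rho. apply pow_sj_le; lra.
  - lra.
  - eapply Rle_trans. 2: apply Cmod_1m_ge. rewrite Cmod_qaj_eq. fold s rho.
    pose proof (pow_le1 s j ltac:(lra)). nra.
  - eapply Rle_trans. apply Cmod_1m_le.
    replace (kj j * aj j * pw q (S (S N)) / z) with ((k * a / z) * (pw q (j + j + S (S N)))).
    2: { unfold kj, aj. rewrite !pw_add. field. auto. }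
    rewrite Cmod_mult, Cmod_pw. fold s. pose proof (pow_le1 s (j + j + S (S N)) ltac:(lra)). nra.
  - auto.
  - replace (kj j * pw q (S N)) with ((q * k) * pw q (j + N)). apply Hdk'.
    unfold kj. rewrite pwS, pw_add. ring.
  - apply cm_mul_le; apply qp_upper; auto.
  - nra.
  - rewrite Cmod_mult. apply Rmult_le_compat; try lra.
    + replace (q * kj j / z) with ((q * k / z) * pw q j) by (unfold kj; field; auto). apply Hd1'.
    + replace (q * aj j) with ((q * a) * pw q j) by (unfold aj; ring). apply Hd2'.
Qed.

Lemma T_bound : exists KT, (0 <= KT)%R /\ forall N m,
  (Cmod (taug (aj N) (kj N) c z q (S m)) <= KT * Cmod q ^ N * Cmod (q * a / z) ^ S m)%R.
Proof.
  destruct (fac_lower (q*k) q Hs Hk) as [dk [Hdk Hdk']].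
  destruct (qp_shift_lower (q*k/z) q Hs Hkz) as [d1 [Hd1 Hd1']].
  destruct (qp_shift_lower (q*a) q Hs Ha) as [d2 [Hd2 Hd2']].
  pose proof s_bounds as Hsb. pose proof rho_bounds as Hrb. pose proof z_nz as Hz.
  set (s := Cmod q) in *. set (rho := Cmod (q * a / z)) in *.
  set (Bz := exp (Cmod z / (1 - s))). set (Bc := exp (Cmod c / (1 - s))).
  assert (HBz : (0 < Bz)%R) by apply exp_pos. assert (HBc : (0 < Bc)%R) by apply exp_pos.
  pose proof (Cmod_ge_0 k).
  exists ((1 + Cmod k) / dk * (Bz * Bc) / (d1 * d2 * (1 - s)))%R. split.
  { apply Rmult_le_pos. apply Rmult_le_pos. apply Rmult_le_pos. lra.
    apply Rlt_le, Rinv_0_lt_compat; lra. nra.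
    apply Rlt_le, Rinv_0_lt_compat. apply Rmult_lt_0_compat; nra. }
  intros N m. unfold taug.
  apply Rle_trans with ((1 + Cmod k) / dk * (Bz * Bc) / (d1 * d2 * (1 - s)) * (s ^ N * rho ^ S m))%R.
  2: { right. ring. }
  apply cm_mul_le. apply cm_div_le. apply cm_mul_le. apply cm_div_le.
  - eapply Rle_trans. apply Cmod_1m_le. unfold kj. rewrite !Cmod_mult, !Cmod_pw. fold s.
    pose proof (pow_le1 s N ltac:(lra)). pose proof (pow_le1 s (S m) ltac:(lra)).
    assert (s ^ N * Cmod k <= Cmod k)%R by nra.
    assert (0 <= s ^ S m * s ^ S m <= 1)%R by (split; nra).
    assert (0 <= s ^ N * Cmod k)%R by nra. nra.
  - auto.
  - replace (kj N * pw q (S m)) with ((q * k) * pw q (N + m)). apply Hdk'.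
    unfold kj. rewrite pwS, pw_add. ring.
  - apply cm_mul_le; apply qp_upper; auto.
  - apply Rmult_lt_0_compat. nra. lra.
  - rewrite !Cmod_mult. apply Rmult_le_compat; try nra.
    + apply Rmult_le_compat; try lra.
      * replace (q * kj N / z) with ((q * k / z) * pw q N) by (unfold kj; field; auto). apply Hd1'.
      * replace (q * aj N) with ((q * a) * pw q N) by (unfold aj; ring). apply Hd2'.
    + eapply Rle_trans. 2: apply Cmod_1m_ge. rewrite Cmod_pw. fold s. simpl.
      pose proof (pow_le1 s m ltac:(lra)). nra.
  - rewrite Cmod_pw, Cmod_qaj_eq. fold s rho. apply pow_sj_le; lra.
Qed.

Lemma g_bound (X X0 : C) (d s : R) j : (0 < d)%R -> (d <= Cmod (1 - X))%R -> X = X0 * pw q j ->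
  (Cmod (g X) <= Cmod X0 / d * Cmod q ^ j)%R.
Proof. intros Hd H1 E. unfold g. eapply Rle_trans. apply cm_div_le. 2: exact Hd. 2: exact H1.
  apply Rle_refl. rewrite E, Cmod_mult, Cmod_pw. right. field. lra. Qed.

Lemma Cc_bound : exists KC, (0 <= KC)%R /\ forall j, (Cmod (Cc (aj j) (kj j) z q) <= KC * Cmod q ^ j)%R.
Proof.
  destruct (fac_lower (q*k) q Hs Hk) as [dk [Hdk Hdk']].
  destruct (fac_lower (q*k/z) q Hs Hkz) as [dz [Hdz Hdz']].
  destruct (fac_lower (q*a) q Hs Ha) as [da [Hda Hda']].
  pose proof rho_bounds as Hrb. pose proof z_nz as Hz.
  exists (Cmod (q*k) / dk + Cmod (q*a/z) / (1 - Cmod (q*a/z)) + Cmod (q*k/z) / dz + Cmod (q*a) / da)%R.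
  split.
  { pose proof (Cmod_ge_0 (q*k)). pose proof (Cmod_ge_0 (q*k/z)). pose proof (Cmod_ge_0 (q*a)).
    assert (0 <= Cmod (q*k) / dk)%R by (apply Rmult_le_pos; [lra | apply Rlt_le, Rinv_0_lt_compat; lra]).
    assert (0 <= Cmod (q*a/z) / (1 - Cmod (q*a/z)))%R by (apply Rmult_le_pos; [lra | apply Rlt_le, Rinv_0_lt_compat; lra]).
    assert (0 <= Cmod (q*k/z) / dz)%R by (apply Rmult_le_pos; [lra | apply Rlt_le, Rinv_0_lt_compat; lra]).
    assert (0 <= Cmod (q*a) / da)%R by (apply Rmult_le_pos; [lra | apply Rlt_le, Rinv_0_lt_compat; lra]).
    lra. }
  intros j. unfold Cc.
  assert (B1 : (Cmod (g (q * kj j)) <= Cmod (q*k) / dk * Cmod q ^ j)%R).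
  { apply (g_bound _ (q*k) dk 0%R j Hdk).
    replace (q * kj j) with ((q*k) * pw q j) by (unfold kj; ring). apply Hdk'.
    unfold kj; ring. }
  assert (B2 : (Cmod (g (q * aj j / z)) <= Cmod (q*a/z) / (1 - Cmod (q*a/z)) * Cmod q ^ j)%R).
  { apply (g_bound _ (q*a/z) (1 - Cmod (q*a/z)) 0%R j). lra.
    eapply Rle_trans. 2: apply Cmod_1m_ge. pose proof (Cmod_qaj j). lra.
    unfold aj; field; auto. }
  assert (B3 : (Cmod (g (q * kj j / z)) <= Cmod (q*k/z) / dz * Cmod q ^ j)%R).
  { apply (g_bound _ (q*k/z) dz 0%R j Hdz).
    replace (q * kj j / z) with ((q*k/z) * pw q j) by (unfold kj; field; auto). apply Hdz'.
    unfold kj; field; auto. }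
  assert (B4 : (Cmod (g (q * aj j)) <= Cmod (q*a) / da * Cmod q ^ j)%R).
  { apply (g_bound _ (q*a) da 0%R j Hda).
    replace (q * aj j) with ((q*a) * pw q j) by (unfold aj; ring). apply Hda'.
    unfold aj; ring. }
  eapply Rle_trans. apply Cmod_1p_le. eapply Rle_trans. apply Rplus_le_compat_r. apply Cmod_1p_le.
  eapply Rle_trans. apply Rplus_le_compat_r. apply Rplus_le_compat_r. apply Cmod_triangle.
  lra. Qed.

Lemma sm_split (F G : nat -> C) M : sm (fun j => F j + G j) M = sm F M + sm G M.
Proof. induction M as [|M IH]; simpl. ring. rewrite IH. ring. Qed.

Definition sig N := sm (fun j => Cc (aj j) (kj j) z q) N.

Lemma pow_to0 (r : R) : (0 <= r < 1)%R -> forall e, (0 < e)%R -> exists N, forall n, (n >= N)%nat -> (r ^ n < e)%R.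
Proof. intros Hr e He. destruct (pow_lt_1_zero r ltac:(rewrite Rabs_pos_eq; lra) e He) as [N HN].
  exists N. intros n Hn. specialize (HN n Hn). rewrite Rabs_pos_eq in HN. auto. apply pow_le; lra. Qed.

Lemma diff_to0 : forall eps, (eps > 0)%R -> exists N0, forall N, (N >= N0)%nat ->
  (Cmod (ps (taug a k c z q) N - sig N) < eps)%R.
Proof. intros eps Heps.
  destruct Ug_bound as [KU [HKU HU]]. destruct T_bound as [KT [HKT HT]].
  pose proof s_bounds as Hsb. pose proof rho_bounds as Hrb.
  set (s := Cmod q) in *. set (rho := Cmod (q * a / z)) in *.
  destruct (pow_to0 rho Hrb (eps * (1 - s) / (2 * (KU + 1)))%R) as [N1 HN1].
  { apply Rdiv_lt_0_compat; nra. }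
  destruct (pow_to0 s Hsb (eps * (1 - rho) / (2 * (KT + 1)))%R) as [N2 HN2].
  { apply Rdiv_lt_0_compat; nra. }
  exists (max N1 N2). intros N HN. rewrite (iter N N), sm_split. unfold sig.
  replace (sm (fun j => Ug (aj j) (kj j) c z q N) N + sm (fun j => Cc (aj j) (kj j) z q) N +
    ps (taug (aj N) (kj N) c z q) N - sm (fun j => Cc (aj j) (kj j) z q) N)
  with (sm (fun j => Ug (aj j) (kj j) c z q N) N + ps (taug (aj N) (kj N) c z q) N) by ring.
  eapply Rle_lt_trans. apply Cmod_triangle.
  assert (E1 : (Cmod (sm (fun j => Ug (aj j) (kj j) c z q N) N) <= KU * rho ^ S N / (1 - s))%R).
  { apply sm_bound. pose proof (pow_le rho (S N) ltac:(lra)). nra. lra.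
    intros j. apply HU. }
  assert (E2 : (Cmod (ps (taug (aj N) (kj N) c z q) N) <= KT * s ^ N / (1 - rho))%R).
  { apply ps_bound. pose proof (pow_le s N ltac:(lra)). nra. lra.
    intros m. specialize (HT N m). fold s rho in HT. lra. }
  specialize (HN1 N ltac:(lia)). specialize (HN2 N ltac:(lia)).
  assert (F1 : (KU * rho ^ S N / (1 - s) < eps / 2)%R).
  { apply Rle_lt_trans with (KU * rho ^ N / (1 - s))%R.
    - unfold Rdiv. apply Rmult_le_compat_r. apply Rlt_le, Rinv_0_lt_compat; lra.
      apply Rmult_le_compat_l. lra. simpl. pose proof (pow_le rho N ltac:(lra)). nra.
    - apply Rcomplements.Rlt_div_l. lra.
      apply Rle_lt_trans with ((KU + 1) * rho ^ N)%R. pose proof (pow_le rho N ltac:(lra)). nra.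
      apply (Rmult_lt_compat_l (KU + 1)) in HN1; [|lra].
      replace ((KU + 1) * (eps * (1 - s) / (2 * (KU + 1))))%R with (eps / 2 * (1 - s))%R in HN1
        by (field; lra). exact HN1. }
  assert (F2 : (KT * s ^ N / (1 - rho) < eps / 2)%R).
  { apply Rcomplements.Rlt_div_l. lra.
    apply Rle_lt_trans with ((KT + 1) * s ^ N)%R. pose proof (pow_le s N ltac:(lra)). nra.
    apply (Rmult_lt_compat_l (KT + 1)) in HN2; [|lra].
    replace ((KT + 1) * (eps * (1 - rho) / (2 * (KT + 1))))%R with (eps / 2 * (1 - rho))%R in HN2
      by (field; lra). exact HN2. }
  lra. Qed.

Lemma sig_conv : exists l, forall eps, (eps > 0)%R -> exists N, forall n, (n >= N)%nat ->
  (Cmod (sig n - l) < eps)%R.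
Proof. apply C_cauchy_lim. intros eps Heps.
  destruct Cc_bound as [KC [HKC HC]]. pose proof s_bounds as Hsb. set (s := Cmod q) in *.
  destruct (pow_to0 s Hsb (eps * (1 - s) / (2 * (KC + 1)))%R) as [N1 HN1].
  { apply Rdiv_lt_0_compat; nra. }
  exists N1. intros n m Hn Hm. unfold sig.
  pose proof (sm_tail (fun j => Cc (aj j) (kj j) z q) KC s N1 (n - N1) HKC Hsb HC) as T1.
  pose proof (sm_tail (fun j => Cc (aj j) (kj j) z q) KC s N1 (m - N1) HKC Hsb HC) as T2.
  replace (N1 + (n - N1))%nat with n in T1 by lia. replace (N1 + (m - N1))%nat with m in T2 by lia.
  set (Sn := sm (fun j => Cc (aj j) (kj j) z q) n) in *.
  set (Sm := sm (fun j => Cc (aj j) (kj j) z q) m) in *.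
  set (SN := sm (fun j => Cc (aj j) (kj j) z q) N1) in *.
  replace (Sn - Sm) with ((Sn - SN) - (Sm - SN)) by ring.
  eapply Rle_lt_trans. apply Cmod_1p_le.
  specialize (HN1 N1 (le_n _)).
  assert (KC * s ^ N1 / (1 - s) < eps / 2)%R.
  { apply Rcomplements.Rlt_div_l. lra.
    apply Rle_lt_trans with ((KC + 1) * s ^ N1)%R. pose proof (pow_le s N1 ltac:(lra)). nra.
    apply (Rmult_lt_compat_l (KC + 1)) in HN1; [|lra].
    replace ((KC + 1) * (eps * (1 - s) / (2 * (KC + 1))))%R with (eps / 2 * (1 - s))%R in HN1
      by (field; lra). exact HN1. }
  lra. Qed.

End Iter.


Lemma eCmul : Defs.Cmul = Cmult. Proof. reflexivity. Qed.
Lemma eCadd : Defs.Cadd = Cplus. Proof. reflexivity. Qed.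
Lemma eCopp : Defs.Copp = Copp. Proof. reflexivity. Qed.
Lemma eCsub : Defs.Csub = Cminus. Proof. reflexivity. Qed.
Lemma eCinv : Defs.Cinv = Cinv. Proof. reflexivity. Qed.
Lemma eCdiv : Defs.Cdiv = Cdiv. Proof. reflexivity. Qed.
Lemma eCmod : Defs.Cmod = Cmod. Proof. reflexivity. Qed.
Lemma eC1 : Defs.C1 = RtoC 1. Proof. reflexivity. Qed.
Lemma eC0 : Defs.C0 = RtoC 0. Proof. reflexivity. Qed.
Lemma eRtoC : Defs.RtoC = RtoC. Proof. reflexivity. Qed.
Lemma eqp : Defs.qpoch = qp. Proof. reflexivity. Qed.
Lemma epw : Defs.Cpow = pw. Proof. reflexivity. Qed.
Lemma eps_ : Defs.psum = ps. Proof. reflexivity. Qed.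

Ltac toC := rewrite ?eCmul, ?eCadd, ?eCopp, ?eCsub, ?eCinv, ?eCdiv, ?eCmod, ?eC1, ?eC0, ?eRtoC, ?eqp, ?epw, ?eps_ in *.

Lemma qp_ratio (x q : C) n : qp (x * q) q n * (1 - x) = qp x q n * (1 - x * pw q n).
Proof. rewrite <- qpS, qp_shift. ring. Qed.

Lemma fac_of_qp (x q : C) : (forall n, (n >= 1)%nat -> qp x q n <> 0) -> forall i, 1 - x * pw q i <> 0.
Proof. intros H i E. apply (H (S i)). lia. rewrite qpS, E. ring. Qed.

Lemma fterm_eq (a k z q r : C) m :
  r * r = k -> a <> 0 -> z <> 0 ->
  (forall n, (n >= 1)%nat -> qp r q n <> 0) -> (forall n, (n >= 1)%nat -> qp (- r) q n <> 0) ->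
  (forall n, (n >= 1)%nat -> qp (q * k) q n <> 0) -> (forall n, (n >= 1)%nat -> qp (q * k / z) q n <> 0) ->
  (forall n, (n >= 1)%nat -> qp (q * a) q n <> 0) -> 1 - pw q (S m) <> 0 ->
  Defs.f_term a k z q r (S m) = taug a k (k / a) z q (S m).
Proof. intros Hr Ha Hz H1 H2 H3 H4 H5 H6.
  unfold Defs.f_term. toC. unfold taug.
  assert (R1 : 1 - r <> 0). { pose proof (fac_of_qp _ _ H1 0%nat). rewrite pw0, Cmult_1_r in H. auto. }
  assert (R2 : 1 + r <> 0). { pose proof (fac_of_qp _ _ H2 0%nat). rewrite pw0, Cmult_1_r in H.
    intro E; apply H; rewrite <- E; ring. }
  assert (K1 : 1 - k <> 0). { subst k. replace (1 - r * r) with ((1 - r) * (1 + r)) by ring. apply Cmult_nz; auto. }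
  assert (K2 : 1 - k * pw q (S m) <> 0). { pose proof (fac_of_qp _ _ H3 m). intro E; apply H.
    rewrite <- E. rewrite pwS. ring. }
  assert (E1 : qp (q * r) q (S m) = qp r q (S m) * (1 - r * pw q (S m)) / (1 - r)).
  { rewrite <- qp_ratio. rewrite Cmult_comm. field. auto. }
  assert (E2 : qp (- (q * r)) q (S m) = qp (- r) q (S m) * (1 + r * pw q (S m)) / (1 + r)).
  { replace (- (q * r)) with ((- r) * q) by ring.
    replace (1 + r * pw q (S m)) with (1 - (- r) * pw q (S m)) by ring.
    rewrite <- qp_ratio. field. intro E; apply R2; rewrite <- E; ring. }
  assert (E3 : qp k q (S m) = qp (q * k) q (S m) * (1 - k) / (1 - k * pw q (S m))).
  { rewrite (Cmult_comm q k). rewrite qp_ratio. field. auto. }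
  rewrite E1, E2, E3.
  assert (N1 := H1 (S m) ltac:(lia)). assert (N2 := H2 (S m) ltac:(lia)).
  assert (N3 := H3 (S m) ltac:(lia)). assert (N4 := H4 (S m) ltac:(lia)). assert (N5 := H5 (S m) ltac:(lia)).
  set (P := pw q (S m)) in *. subst k. match goal with |- ?x = ?y => change (@eq C x y) end. field. repeat split; auto. Qed.

Lemma ps_ext (f h : nat -> C) N : (forall m, f (S m) = h (S m)) -> ps f N = ps h N.
Proof. intros H. induction N as [|N IH]. reflexivity. rewrite !psS, IH, H. reflexivity. Qed.

Lemma pack (a k z q r : C) : r * r = k -> (Cmod q < 1)%R -> (Cmod (q * a) < Cmod z)%R ->
  Defs.denoms_nonzero a k z q r ->
  (exists l, forall eps, (eps > 0)%R -> exists N, forall n, (n >= N)%nat -> (Cmod (sig a k z q n - l) < eps)%R) /\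
  (forall eps, (eps > 0)%R -> exists N0, forall N, (N >= N0)%nat ->
     (Cmod (ps (Defs.f_term a k z q r) N - sig a k z q N) < eps)%R).
Proof. intros Hr Hs Hqa Hd. unfold Defs.denoms_nonzero in Hd. toC.
  destruct Hd as [Ha [Hz H]].
  assert (H1 : forall n, (n >= 1)%nat -> qp r q n <> 0) by (intros n Hn; apply (H n Hn)).
  assert (H2 : forall n, (n >= 1)%nat -> qp (- r) q n <> 0) by (intros n Hn; apply (H n Hn)).
  assert (H3 : forall n, (n >= 1)%nat -> qp (q * k) q n <> 0) by (intros n Hn; apply (H n Hn)).
  assert (H4 : forall n, (n >= 1)%nat -> qp (q * k / z) q n <> 0) by (intros n Hn; apply (H n Hn)).
  assert (H5 : forall n, (n >= 1)%nat -> qp (q * a) q n <> 0) by (intros n Hn; apply (H n Hn)).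
  pose proof (fac_of_qp _ _ H3) as Hk. pose proof (fac_of_qp _ _ H4) as Hkz.
  pose proof (fac_of_qp _ _ H5) as Ha'.
  split.
  - apply sig_conv; auto.
  - intros eps Heps. destruct (diff_to0 a k (k / a) z q Hs Hqa ltac:(field; auto) Hk Hkz Ha' eps Heps)
      as [N0 HN0]. exists N0. intros N HN.
    rewrite (ps_ext _ (taug a k (k / a) z q)). apply HN0; auto.
    intros m. apply fterm_eq; auto. apply pow1_nz; auto. Qed.

Lemma facts_of_denoms (a k z q r : C) : Defs.denoms_nonzero a k z q r ->
  z <> 0 /\ (forall i, 1 - (q*k) * pw q i <> 0) /\ (forall i, 1 - (q*k/z) * pw q i <> 0) /\
  (forall i, 1 - (q*a) * pw q i <> 0).
Proof. intros Hd. unfold Defs.denoms_nonzero in Hd. toC. destruct Hd as [Ha [Hz H]].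
  split; auto. split; [|split]; apply fac_of_qp; intros n Hn; apply (H n Hn). Qed.

Lemma two_nz : RtoC 2 <> 0.
Proof. intro E. injection E. lra. Qed.

Lemma g_sq (X : C) : 1 - X <> 0 -> 1 + X <> 0 -> g (X * X) = (g X + g (- X)) / 2.
Proof. intros H1 H2. unfold g. assert (1 - X * X <> 0).
  { replace (1 - X * X) with ((1 - X) * (1 + X)) by ring. apply Cmult_nz; auto. }
  field. repeat split; auto using two_nz. intro E; apply H2; rewrite <- E; ring. Qed.

Lemma sig_sq (a k z q : C) N : (Cmod q < 1)%R -> (Cmod (q * a) < Cmod z)%R -> z <> 0 ->
  (forall i, 1 - (q*k) * pw q i <> 0) -> (forall i, 1 - (q*(-k)) * pw q i <> 0) ->
  (forall i, 1 - (q*k/z) * pw q i <> 0) -> (forall i, 1 - (q*(-k)/z) * pw q i <> 0) ->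
  (forall i, 1 - (q*a) * pw q i <> 0) -> (forall i, 1 - (q*(-a)) * pw q i <> 0) ->
  sig (a*a) (k*k) (z*z) (q*q) N = (sig a k z q N + sig (-a) (-k) z q N) / 2.
Proof. intros Hs Hqa Hz Hk Hk' Hkz Hkz' Ha Ha'. unfold sig. induction N as [|N IH].
  - simpl. unfold Cdiv. ring.
  - simpl sm. rewrite IH. clear IH. set (j := N).
    unfold Cc, aj, kj. rewrite pw_mul.
    set (P := pw q j).
    set (X3 := q * (P * k) / z). set (X2 := q * (P * a) / z). set (X1 := q * (P * k)). set (X4 := q * (P * a)).
    replace (q * (P * - a) / z) with (- X2) by (unfold X2; field; auto).
    replace (q * (P * - k) / z) with (- X3) by (unfold X3; field; auto).
    replace (q * (P * - k)) with (- X1) by (unfold X1; ring).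
    replace (q * (P * - a)) with (- X4) by (unfold X4; ring).
    replace (q * q * (P * P * (a * a)) / (z * z)) with (X2 * X2) by (unfold X2; field; auto).
    replace (q * q * (P * P * (k * k)) / (z * z)) with (X3 * X3) by (unfold X3; field; auto).
    replace (q * q * (P * P * (a * a))) with (X4 * X4) by (unfold X4; ring).
    replace (q * q * (P * P * (k * k))) with (X1 * X1) by (unfold X1; ring).
    assert (Hx2 : (Cmod X2 < 1)%R).
    { unfold X2, P. eapply Rle_lt_trans. apply (Cmod_qaj a z q Hs Hqa j). apply (rho_lt1 a z q Hqa). }
    rewrite (g_sq X1), (g_sq X2), (g_sq X3), (g_sq X4).
    + clearbody X1 X2 X3 X4 P j. repeat match goal with |- context [sm ?F j] => generalize (sm F j); intro end. field; apply two_nz.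
    + specialize (Ha j). intro E; apply Ha; rewrite <- E; unfold X4, P; ring.
    + specialize (Ha' j). intro E; apply Ha'; rewrite <- E; unfold X4, P; ring.
    + specialize (Hkz j). intro E; apply Hkz; rewrite <- E; unfold X3, P; field; auto.
    + specialize (Hkz' j). intro E; apply Hkz'; rewrite <- E; unfold X3, P; field; auto.
    + apply nz_of_lt1; auto.
    + replace (1 + X2) with (1 - (- X2)) by ring. apply nz_of_lt1. rewrite Cmod_opp. auto.
    + specialize (Hk j). intro E; apply Hk; rewrite <- E; unfold X1, P; ring.
    + specialize (Hk' j). intro E; apply Hk'; rewrite <- E; unfold X1, P; ring.
Qed.

Require Import Defs.
Open Scope R_scope.

Theorem lemma2p4 (a k z q r1 r2 r3 : CC)
  (hr1 : Cmul r1 r1 = k)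
  (hr2 : Cmul r2 r2 = Copp k)
  (hr3 : Cmul r3 r3 = Cmul k k)
  (hq : Cmod q < 1)
  (hqa : Cmod (Cmul q a) < Cmod z)
  (hd1 : denoms_nonzero a k z q r1)
  (hd2 : denoms_nonzero (Copp a) (Copp k) z q r2)
  (hd3 : denoms_nonzero (Cmul a a) (Cmul k k) (Cmul z z) (Cmul q q) r3) :
  exists l1 l2 l3 : CC,
    f_is a k z q r1 l1 /\
    f_is (Copp a) (Copp k) z q r2 l2 /\
    f_is (Cmul a a) (Cmul k k) (Cmul z z) (Cmul q q) r3 l3 /\
    Cadd l1 l2 = Cmul (RtoC 2) l3.
Proof.
  unfold f_is, series_sum_to. toC.
  change (Complex.C) in a, k, z, q, r1, r2, r3.
  assert (hqa2 : (Complex.Cmod (q * - a) < Complex.Cmod z)%R).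
  { replace (q * - a)%C with (- (q * a))%C by ring. rewrite Cmod_opp. auto. }
  assert (hq3 : (Complex.Cmod (q * q) < 1)%R).
  { rewrite Cmod_mult. pose proof (Cmod_ge_0 q). nra. }
  assert (hqa3 : (Complex.Cmod (q * q * (a * a)) < Complex.Cmod (z * z))%R).
  { replace (q * q * (a * a))%C with ((q * a) * (q * a))%C by ring. rewrite (Cmod_mult (q * a) (q * a)), (Cmod_mult z z).
    pose proof (Cmod_ge_0 (q * a)). nra. }
  destruct (pack a k z q r1 hr1 hq hqa hd1) as [[l1 Hl1] D1].
  destruct (pack (- a) (- k) z q r2 hr2 hq hqa2 hd2) as [[l2 Hl2] D2].
  destruct (pack (a * a) (k * k) (z * z) (q * q) r3 hr3 hq3 hqa3 hd3) as [_ D3].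
  destruct (facts_of_denoms _ _ _ _ _ hd1) as [Hz [Hk [Hkz Ha]]].
  destruct (facts_of_denoms _ _ _ _ _ hd2) as [_ [Hk' [Hkz' Ha']]].
  exists l1, l2, ((l1 + l2) / 2)%C. split; [|split; [|split]].
  - intros eps Heps. destruct (D1 (eps/2) ltac:(lra)) as [N1 HN1]. destruct (Hl1 (eps/2) ltac:(lra)) as [N2 HN2].
    exists (max N1 N2). intros M HM. specialize (HN1 M ltac:(lia)). specialize (HN2 M ltac:(lia)).
    replace (ps (f_term a k z q r1) M - l1)%C with
      ((ps (f_term a k z q r1) M - sig a k z q M) + (sig a k z q M - l1))%C by ring.
    eapply Rle_lt_trans. apply Cmod_triangle. lra.
  - intros eps Heps. destruct (D2 (eps/2) ltac:(lra)) as [N1 HN1]. destruct (Hl2 (eps/2) ltac:(lra)) as [N2 HN2].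
    exists (max N1 N2). intros M HM. specialize (HN1 M ltac:(lia)). specialize (HN2 M ltac:(lia)).
    replace (ps (f_term (- a) (- k) z q r2) M - l2)%C with
      ((ps (f_term (- a) (- k) z q r2) M - sig (- a) (- k) z q M) + (sig (- a) (- k) z q M - l2))%C by ring.
    eapply Rle_lt_trans. apply Cmod_triangle. lra.
  - intros eps Heps. destruct (D3 (eps/2) ltac:(lra)) as [N1 HN1].
    destruct (Hl1 (eps/2) ltac:(lra)) as [N2 HN2]. destruct (Hl2 (eps/2) ltac:(lra)) as [N3 HN3].
    exists (max N1 (max N2 N3)). intros M HM. specialize (HN1 M ltac:(lia)).
    specialize (HN2 M ltac:(lia)). specialize (HN3 M ltac:(lia)).
    rewrite (sig_sq a k z q M hq hqa Hz Hk Hk' Hkz Hkz' Ha Ha') in HN1.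
    set (F := ps (f_term (a * a)%C (k * k)%C (z * z)%C (q * q)%C r3) M) in *.
    set (S1 := sig a k z q M) in *. set (S2 := sig (- a)%C (- k)%C z q M) in *.
    replace (F - (l1 + l2) / 2)%C with ((F - (S1 + S2) / 2) + ((S1 - l1) + (S2 - l2)) / 2)%C
      by (field; apply two_nz).
    eapply Rle_lt_trans. apply Cmod_triangle.
    rewrite Cmod_div by apply two_nz.
    assert (E2 : Complex.Cmod (Complex.RtoC 2) = 2%R) by (rewrite Cmod_R; apply Rabs_pos_eq; lra).
    rewrite E2. pose proof (Cmod_triangle (S1 - l1) (S2 - l2)). lra.
  - change (@eq Complex.C (l1 + l2)%C (Complex.RtoC 2 * ((l1 + l2) / 2))%C). field; apply two_nz.
Qed.
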